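(* Let $T$ be a countable Dedekind domain such that $T/J$ is finite for every nonzero ideal $J\subset T$, let $a\in T$ be nonzero and not a unit, and let $R=T/aT$. Let $N$ be a finite $R$-module, $\delta>0$ a real number, $\epsilon_R>0$ a real number, and $n$ a positive integer; let $V=R^n$. Let $X$ be an $\epsilon_R$-balanced random vector valued in $V$, let $F\in\mathrm{Hom}_R(V,N)$ be a code of distance $\delta n$, and let $A\in N$. Then \[\left|\mathbb{P}(FX=A)-|N|^{-1}\right|\leq\exp(-\epsilon_R\delta n/|R|^2).\]
   Context: A random variable $y$ valued in $R$ is $\epsilon_R$-balanced if for every ideal $I$ of $R$ such that $R/I$ is an elementary abelian group (i.e. $R/I\simeq(\mathbb{Z}/p\mathbb{Z})^m$ as abelian groups for some prime $p$ and $m>0$), the image of $y$ in $R/I$ lies in any given proper affine $\mathbb{F}_p$-subspace of $R/I$ with probability at most $1-\epsilon_R$. A random vector is $\epsilon_R$-balanced if its entries are independent and $\epsilon_R$-balanced. Let $v_1,\dots,v_n$ be the standard basis of $V=R^n$; for $\sigma\subset[n]=\{1,\dots,n\}$, $V_\sigma$ is the submodule generated by the $v_i$ with $i\notin\sigma$. $F\in\mathrm{Hom}_R(V,N)$ is a code of distance $w$ if $F(V_\sigma)=N$ for every $\sigma\subset[n]$ with $|\sigma|<w$. *)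

(* Defs.v *)
From HB Require Import structures.
From mathcomp Require Import all_boot all_order all_algebra.
From mathcomp Require Import reals sequences exp.
Set Implicit Arguments. Unset Strict Implicit. Unset Printing Implicit Defensive.
Import Order.TTheory GRing.Theory Num.Theory.
Local Open Scope ring_scope.

Definition is_ideal (T : comNzRingType) (I : T -> Prop) : Prop :=
  [/\ I 0, (forall x y, I x -> I y -> I (x - y)) & (forall r x, I x -> I (r * x))].

Definition is_prime_ideal (T : comNzRingType) (I : T -> Prop) : Prop :=
  [/\ is_ideal I, ~ I 1 & (forall x y, I (x * y) -> I x \/ I y)].

Definition is_maximal_ideal (T : comNzRingType) (I : T -> Prop) : Prop :=
  [/\ is_ideal I, ~ I 1 &
      (forall J : T -> Prop, is_ideal J -> (forall x, I x -> J x) ->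
         (forall x, J x -> I x) \/ J 1)].

Definition noetherian (T : comNzRingType) : Prop :=
  forall I : nat -> T -> Prop,
    (forall k, is_ideal (I k)) ->
    (forall k x, I k x -> I k.+1 x) ->
    exists m, forall k x, (m <= k)%N -> I k x -> I m x.

(* Integrally closed: if x/y (y != 0) is a root of a monic polynomial over T,
   i.e.  sum_i p_i x^i y^(d-i) = 0 with p monic of degree d, then y | x. *)
Definition integrally_closed (T : idomainType) : Prop :=
  forall (x y : T) (p : {poly T}), y != 0 -> p \is monic ->
    \sum_(i < size p) p`_i * x ^+ i * y ^+ ((size p).-1 - i) = 0 ->
    exists z, x = y * z.

Definition dedekind_domain (T : idomainType) : Prop :=
  [/\ noetherian T, integrally_closed T &
      forall P : T -> Prop, is_prime_ideal P -> (exists x, P x /\ x != 0) ->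
        is_maximal_ideal P].

Definition finite_quotient (T : comNzRingType) (J : T -> Prop) : Prop :=
  exists s : seq T, forall x, exists2 y, y \in s & J (x - y).

Definition set_ideal (R : finComNzRingType) (I : {set R}) : bool :=
  [&& 0 \in I, [forall x in I, forall y in I, x - y \in I] &
      [forall r, forall x in I, r * x \in I]].

Definition set_subgroup (R : finComNzRingType) (W : {set R}) : bool :=
  (0 \in W) && [forall x in W, forall y in W, x - y \in W].

Definition is_distr (K : realType) (S : finType) (mu : S -> K) : Prop :=
  (forall s, 0 <= mu s) /\ \sum_s mu s = 1.

(* mu is eps-balanced: for every ideal I with R/I an elementary abelian
   p-group (p prime, I proper, p annihilates R/I), and every proper affine
   F_p-subspace of R/I -- whose preimage in R is c + W with W an additive
   subgroup of R, I <= W, W != R -- the mass of that preimage is <= 1 - eps. *)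
Definition balanced (K : realType) (R : finComNzRingType) (eps : K)
    (mu : R -> K) : Prop :=
  forall (I : {set R}) (p : nat),
    set_ideal I -> prime p -> (p%:R : R) \in I -> I != [set: R] ->
    forall (W : {set R}) (c : R),
      set_subgroup W -> I \subset W -> W != [set: R] ->
      \sum_(r | r - c \in W) mu r <= 1 - eps.

(* V_sigma : vectors of R^n supported outside sigma. F is a code of distance w
   if F(V_sigma) = N whenever |sigma| < w. *)
Definition is_code (K : realType) (R : finComNzRingType) (N : finLmodType R)
    (n : nat) (F : {linear 'rV[R]_n -> N}) (w : K) : Prop :=
  forall sigma : {set 'I_n}, (#|sigma|%:R < w) ->
    forall y : N, exists x : 'rV[R]_n,
      (forall i, i \in sigma -> x ord0 i = 0) /\ F x = y.

(* P(F X = A) for X with independent entries X_i ~ mu i. *)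
Definition prob_code (K : realType) (R : finComNzRingType) (N : finLmodType R)
    (n : nat) (F : {linear 'rV[R]_n -> N}) (mu : 'I_n -> R -> K) (A : N) : K :=
  \sum_(x : 'rV[R]_n | F x == A) \prod_(i < n) mu i (x ord0 i).

(* Main.v *)
Require Import Defs.
From HB Require Import structures.
From mathcomp Require Import all_boot all_order all_algebra.
From mathcomp Require Import reals sequences exp.
From mathcomp Require Import fingroup cyclic complex.
From mathcomp Require Import ring lra zify.
Set Implicit Arguments. Unset Strict Implicit. Unset Printing Implicit Defensive.
Import Order.TTheory GRing.Theory Num.Theory.
Local Open Scope ring_scope.


Section Sep.
Variables (C : numClosedFieldType) (N : finZmodType).

Definition phom (G : {set N}) (g : N -> C) :=
  g 0 = 1 /\ forall a b, a \in G -> b \in G -> g (a + b) = g a * g b.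
Definition subg (G : {set N}) :=
  0 \in G /\ forall a b, a \in G -> b \in G -> a - b \in G.

Lemma card_mul (x : N) : x *+ #|N| = 0.
Proof.
have := @expg_cardG _ [set: N]%G x (in_setT x).
by rewrite cardsT.
Qed.

Lemma cardN_gt0 : (0 < #|N|)%N.
Proof. by apply/card_gt0P; exists 0. Qed.

Lemma subgN G a : subg G -> a \in G -> - a \in G.
Proof. by move=> [h0 hB] ha; rewrite -sub0r hB. Qed.

Lemma subgD G a b : subg G -> a \in G -> b \in G -> a + b \in G.
Proof. by move=> hG ha hb; rewrite -(opprK b) (proj2 hG) // subgN. Qed.

Lemma subgMn G a k : subg G -> a \in G -> a *+ k \in G.
Proof.
move=> hG ha; elim: k => [|k IH]; first by rewrite mulr0n (proj1 hG).
by rewrite mulrS subgD.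
Qed.

Lemma phomMn G g a k : subg G -> phom G g -> a \in G -> g (a *+ k) = g a ^+ k.
Proof.
move=> hG [g0 gD] ha; elim: k => [|k IH]; first by rewrite mulr0n expr0.
by rewrite mulrS gD ?subgMn // IH exprS.
Qed.

Lemma ymod (y : N) k : y *+ k = y *+ (k %% #|N|).
Proof.
by rewrite {1}(divn_eq k #|N|) mulrnDr mulnC mulrnA card_mul mul0rn add0r.
Qed.

Lemma yneg (y : N) k : - (y *+ k) = y *+ (k * #|N|.-1).
Proof.
apply/eqP; rewrite eq_sym -subr_eq0 opprK -mulrnDr -mulnSr prednK ?cardN_gt0 //.
by rewrite mulnC mulrnA card_mul mul0rn.
Qed.

Lemma step G g y d t : subg G -> phom G g -> (0 < d)%N -> y *+ d \in G ->
  (forall d', (0 < d')%N -> y *+ d' \in G -> (d <= d')%N) -> t ^+ d = g (y *+ d) ->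
  exists G' g', [/\ subg G', phom G' g', G \subset G', y \in G'
     & g' y = t /\ {in G, g' =1 g}].
Proof.
move=> hG hg d0 yd dmin td.
have claimA : forall j, y *+ j \in G -> g (y *+ j) = t ^+ j.
  move=> j yj.
  have e := divn_eq j d.
  have yr : y *+ (j %% d) \in G.
    have -> : y *+ (j %% d) = y *+ j - (y *+ d) *+ (j %/ d).
      by rewrite {2}e mulrnDr mulnC mulrnA addrC addKr.
    by rewrite (proj2 hG) // subgMn.
  have r0 : (j %% d = 0)%N.
    apply/eqP; apply/negP => /negP hr.
    have /dmin/(_ yr) : (0 < j %% d)%N by rewrite lt0n.
    by rewrite leqNgt ltn_mod d0.
  by rewrite e r0 addn0 mulnC mulrnA (phomMn _ hG hg yd) -td -exprM.
have claimB0 : forall a b j k, (k <= j)%N -> a \in G -> b \in G ->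
    a + y *+ j = b + y *+ k -> g a * t ^+ j = g b * t ^+ k.
  move=> a b j k hkj ha hb e.
  have yjk : y *+ (j - k) = b - a.
    rewrite -(subnK hkj) mulrnDr addrA in e; move/addIr: e => e.
    by rewrite -e addrAC subrr add0r.
  have hba : b = a + (b - a) by rewrite addrC subrK.
  rewrite hba (proj2 hg) ?(proj2 hG) // -yjk claimA ?yjk ?(proj2 hG) //.
  by rewrite -mulrA -exprD subnK.
have claimB : forall a b j k, a \in G -> b \in G ->
    a + y *+ j = b + y *+ k -> g a * t ^+ j = g b * t ^+ k.
  move=> a b j k ha hb e; case/orP: (leq_total k j) => h.
    exact: claimB0.
  by symmetry; apply: claimB0.
pose M := #|N|.
pose G' := [set z | [exists a : N, [exists k : 'I_M, (a \in G) && (z == a + y *+ k)]]].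
pose g' := fun z => if [pick ak : N * 'I_M | (ak.1 \in G) && (z == ak.1 + y *+ ak.2)]
   is Some ak then g ak.1 * t ^+ ak.2 else 1.
have inG' : forall a k, a \in G -> a + y *+ k \in G'.
  move=> a k ha; rewrite inE; apply/existsP; exists a; apply/existsP.
  exists (Ordinal (ltn_pmod k cardN_gt0)).
  by rewrite ha /= -ymod eqxx.
have g'E : forall a k, a \in G -> g' (a + y *+ k) = g a * t ^+ k.
  move=> a k ha; rewrite /g'; case: pickP => [[a0 k0] /= /andP[ha0 /eqP e]| none].
    by rewrite (claimB _ _ _ _ ha ha0 e).
  have := none (a, Ordinal (ltn_pmod k cardN_gt0)).
  by rewrite /= ha -ymod eqxx.
have G'P : forall z, z \in G' -> exists a k, a \in G /\ z = a + y *+ k.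
  move=> z; rewrite inE => /existsP[a /existsP[k /andP[ha /eqP ->]]].
  by exists a, k.
have e0 : forall a : N, a = a + y *+ 0 by move=> a; rewrite mulr0n addr0.
exists G', g'; split.
- split; first by rewrite (e0 0) inG' // (proj1 hG).
  move=> z1 z2 /G'P[a[j[ha ->]]] /G'P[b[k[hb ->]]].
  have -> : a + y *+ j - (b + y *+ k) = (a - b) + y *+ (j + k * M.-1).
    by rewrite mulrnDr -yneg opprD addrACA.
  by rewrite inG' // (proj2 hG).
- split; first by rewrite (e0 0) g'E ?(proj1 hG) // expr0 mulr1 (proj1 hg).
  move=> z1 z2 /G'P[a[j[ha ->]]] /G'P[b[k[hb ->]]].
  have -> : a + y *+ j + (b + y *+ k) = (a + b) + y *+ (j + k).
    by rewrite mulrnDr addrACA.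
  by rewrite !g'E ?subgD // (proj2 hg) // exprD mulrACA.
- by apply/subsetP => a ha; rewrite (e0 a) inG'.
- have -> : y = 0 + y *+ 1 by rewrite mulr1n add0r.
  by rewrite inG' // (proj1 hG).
split.
  have -> : y = 0 + y *+ 1 by rewrite mulr1n add0r.
  by rewrite g'E ?(proj1 hG) // expr1 (proj1 hg) mul1r.
by move=> a ha; rewrite [in LHS](e0 a) g'E // expr0 mulr1.
Qed.

Lemma extend k : forall G g, (#|~: G| <= k)%N -> subg G -> phom G g ->
  exists h, phom setT h /\ {in G, h =1 g}.
Proof.
elim: k => [|k IH] G g hk hG hg.
  have GT : G = setT.
    apply/setP => x; rewrite inE; apply/negP => /negP hx.
    by move: hk; rewrite leqn0 => /eqP/cards0_eq/setP/(_ x); rewrite !inE hx.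
  by exists g; split => //; rewrite -GT.
have [GT|nGT] := eqVneq G setT; first by exists g; split => //; rewrite -GT.
have [y hy] : exists y, y \notin G.
  case/boolP: [exists y, y \notin G] => [/existsP//|/existsPn hall].
  by exfalso; move/eqP: nGT; apply; apply/setP => z; rewrite inE; have := hall z; rewrite negbK.
have exd : exists d, (0 < d)%N && (y *+ d \in G).
  by exists #|N|; rewrite cardN_gt0 card_mul (proj1 hG).
have [d /andP[d0 yd] dmin] := find_ex_minn exd.
have td : (d.-root (g (y *+ d))) ^+ d = g (y *+ d) by rewrite rootCK.
have [G' [g' [hG' hg' sGG' yG' [_ e']]]] :=
  step hG hg d0 yd (fun d' h1 h2 => dmin d' (introT andP (conj h1 h2))) td.
have hk' : (#|~: G'| <= k)%N.
  rewrite -ltnS; apply: leq_trans hk; apply: proper_card; apply/properP; split.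
    by rewrite setCS.
  by exists y; rewrite !inE ?hy // yG'.
have [h [hh eh]] := IH G' g' hk' hG' hg'.
exists h; split => // a ha; rewrite eh ?e' //; exact: (subsetP sGG').
Qed.

Lemma nontriv_root d : (1 < d)%N -> exists t : C, t ^+ d = 1 /\ t != 1.
Proof.
move=> d1.
pose p := \sum_(i < d) ('X^i : {poly C}).
have : size p != 1%N.
  apply/negP => /size_poly1P [c c0 pc].
  have hd : (d.-1 < d)%N by rewrite ltn_predL ltnW.
  have : p`_(d.-1) = 1.
    rewrite /p coef_sum (bigD1 (Ordinal hd)) //= coefXn eqxx big1 ?addr0 //.
    move=> i hi; rewrite coefXn; case: eqP => // hi2; case/eqP: hi; apply/val_inj => /=; by rewrite hi2.
  have hd0 : (d.-1 == 0)%N = false by case: d d1 {hd p pc} => [|[|]].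
  by rewrite pc coefC hd0 => /eqP; rewrite eq_sym oner_eq0.
move=> /closed_rootP [t ht]; exists t.
have st : \sum_(i < d) t ^+ i = 0.
  move: ht; rewrite /root /p horner_sum.
  by under eq_bigr do rewrite hornerXn; move/eqP.
split; first by apply/eqP; rewrite -subr_eq0 subrX1 st mulr0.
apply/eqP => t1; move: st; rewrite t1.
under eq_bigr do rewrite expr1n.
by rewrite sumr_const card_ord => /eqP; rewrite pnatr_eq0 => /eqP d0; move: d1; rewrite d0.
Qed.

Lemma separate x : x != 0 -> exists h, phom setT h /\ h x != 1.
Proof.
move=> x0.
pose G0 := [set (0 : N)].
have hG0 : subg G0 by split; [rewrite inE|move=> a b; rewrite !inE => /eqP-> /eqP->; rewrite subr0].
have hg0 : phom G0 (fun _ => 1) by split => // *; rewrite mulr1.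
have exd : exists d, (0 < d)%N && (x *+ d \in G0).
  by exists #|N|; rewrite cardN_gt0 card_mul inE; apply/eqP.
have [d /andP[d0 yd] dmin] := find_ex_minn exd.
have d1 : (1 < d)%N.
  rewrite ltn_neqAle d0 andbT; apply/negP => /eqP d1.
  by move: yd; rewrite -d1 mulr1n inE (negbTE x0).
have [t [td t1]] := nontriv_root d1.
have [G' [g' [hG' hg' _ xG' [gx _]]]] :=
  step hG0 hg0 d0 yd (fun d' h1 h2 => dmin d' (introT andP (conj h1 h2))) td.
have [h [hh eh]] := extend (leqnn _) hG' hg'.
by exists h; split => //; rewrite eh ?gx.
Qed.

Lemma subgT : subg setT.
Proof. by split => *; rewrite inE. Qed.

Lemma hom_root h : phom setT h -> forall x, h x ^+ #|N| = 1.
Proof.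
move=> hh x; rewrite -(phomMn _ subgT hh) ?inE // card_mul; exact: (proj1 hh).
Qed.

Lemma homD h : phom setT h -> forall a b, h (a + b) = h a * h b.
Proof. by move=> hh a b; rewrite (proj2 hh) ?inE. Qed.

Definition rpol : {poly C} := 'X^#|N| - 1%:P.
Definition rs : seq C := undup (sval (closed_field_poly_normal rpol)).

Lemma rsP z : (z \in rs) = (z ^+ #|N| == 1).
Proof.
rewrite /rs mem_undup; case: closed_field_poly_normal => r /= e.
have lc : lead_coef rpol = 1 by apply/monicP; rewrite monicXnsubC ?cardN_gt0.
rewrite lc in e; rewrite -root_prod_XsubC -(rootZ _ _ (oner_neq0 C)) -e.
by rewrite /root /rpol !hornerE subr_eq0.
Qed.

Definition Ch := {ffun N -> seq_sub rs}.
Definition ev (f : Ch) (x : N) : C := ssval (f x).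
Definition ischar (f : Ch) : bool :=
  (ev f 0 == 1) && [forall a, [forall b, ev f (a + b) == ev f a * ev f b]].
Definition chars := [set f : Ch | ischar f].

Lemma ischarP f : reflect (phom setT (ev f)) (ischar f).
Proof.
apply: (iffP andP) => [[/eqP h0 /forallP hD]|[h0 hD]].
  by split => // a b _ _; have /forallP/(_ b)/eqP := hD a.
by split; [apply/eqP|apply/forallP => a; apply/forallP => b; rewrite hD ?inE].
Qed.

Lemma ev_root f x : ev f x ^+ #|N| = 1.
Proof. by apply/eqP; rewrite -rsP; exact: ssvalP. Qed.

Lemma ev_neq0 f x : ev f x != 0.
Proof.
apply/eqP => e; have := ev_root f x; rewrite e expr0n.
by case: #|N| cardN_gt0 => // n _ /eqP; rewrite eq_sym oner_eq0.
Qed.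

Lemma mkchar h : phom setT h -> exists f : Ch, f \in chars /\ ev f =1 h.
Proof.
move=> hh.
have hr : forall x, h x \in rs by move=> x; rewrite rsP hom_root.
exists [ffun x => SeqSub (hr x)].
have e : ev [ffun x => SeqSub (hr x)] =1 h by move=> x; rewrite /ev ffunE.
split => //; rewrite inE; apply/ischarP.
split; first by rewrite e (proj1 hh).
by move=> a b _ _; rewrite !e homD.
Qed.

Lemma ev_inj (f g : Ch) : ev f =1 ev g -> f = g.
Proof. by move=> e; apply/ffunP => x; apply/val_inj; exact: e. Qed.

Lemma sum_chars x : \sum_(f in chars) ev f x = (#|chars|%:R) * (x == 0)%:R.
Proof.
have [->|x0] := eqVneq x 0.
  rewrite mulr1 -sumr_const; apply: eq_bigr => f; rewrite inE => /ischarP hf.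
  exact: (proj1 hf).
have [h [hh hx]] := separate x0.
have [psi [psiC epsi]] := mkchar hh.
have hr : forall (f : Ch) y, ev psi y * ev f y \in rs.
  by move=> f y; rewrite rsP exprMn !ev_root mulr1.
pose mc (f : Ch) : Ch := [ffun y => SeqSub (hr f y)].
have emc : forall f y, ev (mc f) y = ev psi y * ev f y by move=> f y; rewrite /ev ffunE.
have mcI : injective mc.
  move=> f g e; apply: ev_inj => y.
  by apply: (mulfI (ev_neq0 psi y)); rewrite -!emc e.
have psih : phom setT (ev psi) by move: psiC; rewrite inE => /ischarP.
have mcC : forall f, (mc f \in chars) = (f \in chars).
  move=> f; rewrite !inE; apply/ischarP/ischarP => [[h0 hD]|[h0 hD]].
    split.
      by move: h0; rewrite emc (proj1 psih) mul1r.
    move=> a b _ _; have := hD a b (in_setT a) (in_setT b); rewrite !emc homD //.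
    by rewrite mulrACA; apply: mulfI; rewrite mulf_neq0 ?ev_neq0.
  split; first by rewrite emc (proj1 psih) h0 mulr1.
  by move=> a b _ _; rewrite !emc homD // hD ?inE // mulrACA.
have : \sum_(f in chars) ev f x = ev psi x * \sum_(f in chars) ev f x.
  rewrite {1}(reindex_inj mcI) mulr_sumr.
  by apply: eq_big => [f|f _]; [rewrite mcC | rewrite emc].
move/eqP; rewrite -subr_eq0 -{1}[X in X - _]mul1r -mulrBl mulf_eq0 subr_eq0 eq_sym.
rewrite epsi (negbTE hx) /= => /eqP ->; by rewrite mulr0.
Qed.

Lemma sum_ev_nontriv f y : f \in chars -> ev f y != 1 -> \sum_x ev f x = 0.
Proof.
rewrite inE => /ischarP hf hy.
have : \sum_x ev f x = ev f y * \sum_x ev f x.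
  rewrite {1}(reindex_inj (addrI y)) mulr_sumr; apply: eq_bigr => x _.
  by rewrite homD.
move/eqP; rewrite -subr_eq0 -{1}[X in X - _]mul1r -mulrBl mulf_eq0 subr_eq0 eq_sym.
by rewrite (negbTE hy) /= => /eqP.
Qed.

Lemma one_char : exists f1 : Ch, f1 \in chars /\ ev f1 =1 (fun _ => 1).
Proof. by apply: mkchar; split => // *; rewrite mulr1. Qed.

Lemma chars_card : #|chars| = #|N|.
Proof.
have [f1 [f1C e1]] := one_char.
have E1 : \sum_x \sum_(f in chars) ev f x = #|chars|%:R.
  under eq_bigr do rewrite sum_chars.
  rewrite (bigD1 0) //= eqxx mulr1 big1 ?addr0 // => x /negbTE ->.
  by rewrite mulr0.
have E2 : \sum_(f in chars) \sum_x ev f x = #|N|%:R.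
  rewrite (bigD1 f1) //=.
  have -> : \sum_x ev f1 x = #|N|%:R.
    by rewrite (eq_bigr (fun _ => 1)) // sumr_const.
  rewrite big1 ?addr0 //.
  move=> f /andP[fC ff1].
  have [y hy] : exists y, ev f y != 1.
    case/boolP: [exists y, ev f y != 1] => [/existsP//|/existsPn hall].
    by case/eqP: ff1; apply: ev_inj => y; rewrite e1; have := hall y; rewrite negbK => /eqP.
  exact: sum_ev_nontriv hy.
apply/eqP; rewrite -(eqr_nat C) -E1 -E2 exchange_big //.
Qed.

Lemma indicator y : (y == 0)%:R = (#|N|%:R)^-1 * \sum_(f in chars) ev f y :> C.
Proof.
by rewrite sum_chars chars_card mulrA mulVf ?mul1r // pnatr_eq0 -lt0n cardN_gt0.
Qed.
End Sep.


Section Zeta.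
Variable C : numClosedFieldType.

Definition rr (w : C) := w + w^*.

Lemma rr_real w : rr w \is Num.real.
Proof. by rewrite CrealE /rr rmorphD /= conjCK addrC. Qed.

Lemma norm1_conj (w : C) : `|w| = 1 -> w * w^* = 1.
Proof. by move=> h; rewrite -normCK h expr1n. Qed.

Lemma dist_rr (w : C) : `|w| = 1 -> `|1 - w| ^+ 2 = 2 - rr w.
Proof.
move=> h; rewrite normCK rmorphB rmorph1 /rr.
have -> : (1 - w) * (1 - w^*) = 1 + w * w^* - (w + w^*) by ring.
by rewrite norm1_conj.
Qed.

Lemma one_sub_X (z : C) j : `|z| = 1 -> `|1 - z ^+ j| <= j%:R * `|1 - z|.
Proof.
move=> hz.
have -> : 1 - z ^+ j = (1 - z) * \sum_(i < j) z ^+ i.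
  by rewrite -opprB subrX1 -mulNr opprB.
rewrite normrM mulrC ler_wpM2r //.
apply: le_trans (ler_norm_sum _ _ _) _.
rewrite (eq_bigr (fun _ => 1)) ?sumr_const ?card_ord //.
by move=> i _; rewrite normrX hz expr1n.
Qed.

Lemma zeta_bound (z : C) k : (0 < k)%N -> z ^+ k = 1 -> z != 1 ->
  8 <= (k%:R) ^+ 2 * `|1 - z| ^+ 2.
Proof.
move=> k0 zk z1.
have hz : `|z| = 1.
  by apply/eqP; rewrite -(pexpr_eq1 k0) // -normrX zk normr1.
have hzj : forall j, `|z ^+ j| = 1 by move=> j; rewrite normrX hz expr1n.
have S0 : \sum_(j < k) z ^+ j = 0.
  have : (z - 1) * \sum_(j < k) z ^+ j = 0 by rewrite -subrX1 zk subrr.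
  by move/eqP; rewrite mulf_eq0 subr_eq0 (negbTE z1) => /eqP.
have R0 : \sum_(j < k) rr (z ^+ j) = 0.
  by rewrite /rr big_split /= -rmorph_sum S0 rmorph0 addr0.
have [j [j0 jk rj]] : exists j, [/\ (0 < j)%N, (j < k)%N & rr (z ^+ j) <= 0].
  case/boolP: [exists j : 'I_k, (0 < j)%N && (rr (z ^+ j) <= 0)].
    by move=> /existsP[j /andP[j0 rj]]; exists j.
  move=> /existsPn hall; exfalso.
  case: k k0 zk S0 R0 hall => // k' _ _ _ R0 hall.
  move: R0; rewrite big_ord_recl expr0 /rr conjC1 => /eqP.
  apply/negP; rewrite lt0r_neq0 // ltr_pwDl //; first by rewrite addr_gt0 ?ltr01.
  apply: sumr_ge0 => i _.
  have := hall (lift ord0 i); rewrite /= => hi.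
  apply: ltW; rewrite real_ltNge ?real0 //; exact: rr_real.
pose j' := if (j.*2 <= k)%N then j else (k - j)%N.
have j'0 : (0 < j')%N by rewrite /j'; case: ifP => // _; rewrite subn_gt0.
have j'k : (j'.*2 <= k)%N.
  by rewrite /j'; case: ifP => // /negbT; rewrite -ltnNge => h; lia.
have rj' : rr (z ^+ j') <= 0.
  rewrite /j'; case: ifP => // _.
  have e1 : z ^+ (k - j) * z ^+ j = 1 by rewrite -exprD subnK ?zk // ltnW.
  have e2 : z ^+ j * (z ^+ j)^* = 1 by rewrite norm1_conj.
  have -> : z ^+ (k - j) = (z ^+ j)^*.
    by rewrite -[LHS]mulr1 -e2 mulrA e1 mul1r.
  by rewrite /rr /= conjCK addrC.
have h2 : 2 <= `|1 - z ^+ j'| ^+ 2.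
  by rewrite dist_rr ?hzj // lerDl oppr_ge0.
have h3 : `|1 - z ^+ j'| ^+ 2 <= (j'%:R * `|1 - z|) ^+ 2.
  by apply: lerXn2r; rewrite ?nnegrE ?mulr_ge0 // one_sub_X.
have h4 : ((2 * j')%:R ^+ 2 : C) <= k%:R ^+ 2.
  by rewrite -!natrX ler_nat; nia.
apply: (@le_trans _ _ ((2 * j')%:R ^+ 2 * `|1 - z| ^+ 2)); last first.
  by rewrite ler_wpM2r // exprn_ge0.
rewrite natrM exprMn -mulrA (_ : (8:C) = 2%:R ^+ 2 * 2); last first.
  by rewrite -natrX -natrM.
rewrite ler_wpM2l ?exprn_ge0 // -exprMn; exact: le_trans h2 h3.
Qed.
End Zeta.


Section HomMore.
Variables (C : numClosedFieldType) (N : finZmodType).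
Implicit Types h : N -> C.

Lemma hom_neq0 h x : phom setT h -> h x != 0.
Proof.
move=> hh; apply/eqP => e; have := hom_root hh x; rewrite e expr0n.
by case: #|N| (cardN_gt0 N) => // n _ /eqP; rewrite eq_sym oner_eq0.
Qed.

Lemma homN h x : phom setT h -> h (- x) = (h x)^-1.
Proof.
move=> hh; apply: (mulfI (hom_neq0 x hh)); rewrite -homD // subrr (proj1 hh).
by rewrite mulfV ?hom_neq0.
Qed.

Lemma homB h a b : phom setT h -> h (a - b) = h a / h b.
Proof. by move=> hh; rewrite homD // homN. Qed.

Lemma hom_norm h x : phom setT h -> `|h x| = 1.
Proof.
move=> hh; apply/eqP; rewrite -(pexpr_eq1 (cardN_gt0 N)) // -normrX hom_root //.
by rewrite normr1.
Qed.
End HomMore.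

Lemma coset_bound (K : realType) (R : finComNzRingType) (eps : K) (mu : R -> K)
  (C : numClosedFieldType) (psi : R -> C) :
  (forall r, 0 <= mu r) -> balanced eps mu -> phom setT psi -> (exists r, psi r != 1) ->
  forall c, \sum_(r | psi r == psi c) mu r <= 1 - eps.
Proof.
move=> mu0 hbal hpsi [r0 hr0] c.
have exm : exists m, (0 < m)%N && [forall s, psi s ^+ m == 1].
  exists #|R|; rewrite cardN_gt0; apply/forallP => s; rewrite hom_root //.
have [m /andP[m0 /forallP hm] mmin] := find_ex_minn exm.
have m1 : (1 < m)%N.
  rewrite ltn_neqAle m0 andbT; apply/negP => /eqP m1.
  by move: (hm r0); rewrite -m1 expr1 (negbTE hr0).
pose p := pdiv m.
have pp : prime p by exact: pdiv_prime.
have pm : (p %| m)%N := pdiv_dvd m.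
pose q := (m %/ p)%N.
have qp : (q * p = m)%N by rewrite /q divnK.
have p1 : (1 < p)%N by exact: prime_gt1.
have q0 : (0 < q)%N by rewrite /q divn_gt0 ?prime_gt0 // dvdn_leq.
have qm : (q < m)%N by rewrite -qp ltn_Pmulr.
pose psi' := fun s => psi s ^+ q.
have hpsi' : phom setT psi'.
  split; first by rewrite /psi' (proj1 hpsi) expr1n.
  by move=> a b _ _; rewrite /psi' homD // exprMn.
have [s0 hs0] : exists s0, psi' s0 != 1.
  case/boolP: [exists s, psi' s != 1] => [/existsP//|/existsPn hall].
  have : (m <= q)%N.
    apply: mmin; rewrite q0 /=; apply/forallP => s; have := hall s; by rewrite negbK.
  by rewrite leqNgt qm.
have pI : forall s, psi' s ^+ p = 1.
  by move=> s; rewrite /psi' -exprM qp; apply/eqP; exact: hm.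
pose I := [set r : R | [forall s, psi' (r * s) == 1]].
pose W := [set r : R | psi' r == 1].
have hI : set_ideal I.
  apply/and3P; split.
  - by rewrite inE; apply/forallP => s; rewrite mul0r (proj1 hpsi').
  - apply/forallP => x; apply/implyP; rewrite inE => /forallP hx.
    apply/forallP => y; apply/implyP; rewrite inE => /forallP hy.
    rewrite inE; apply/forallP => s.
    by rewrite mulrBl homB // (eqP (hx s)) (eqP (hy s)) divr1.
  - apply/forallP => r; apply/forallP => x; apply/implyP; rewrite !inE => /forallP hx.
    by apply/forallP => s; rewrite -mulrA mulrCA hx.
have pIn : (p%:R : R) \in I.
  by rewrite inE; apply/forallP => s; rewrite mulr_natl (phomMn _ (subgT _) hpsi') ?inE // pI.
have IW : I \subset W.
  by apply/subsetP => r; rewrite !inE => /forallP/(_ 1); rewrite mulr1.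
have WT : W != [set: R].
  by apply/negP => /eqP/setP/(_ s0); rewrite !inE (negbTE hs0).
have IT : I != [set: R].
  apply/negP => /eqP IT; move/negP: WT; apply; apply/eqP; apply/setP => r.
  by rewrite in_setT; apply: (subsetP IW); rewrite IT in_setT.
have hW : set_subgroup W.
  apply/andP; split; first by rewrite inE (proj1 hpsi').
  apply/forallP => x; apply/implyP; rewrite inE => /eqP hx.
  apply/forallP => y; apply/implyP; rewrite inE => /eqP hy.
  by rewrite inE homB // hx hy divr1.
have := hbal I p hI pp pIn IT W c hW IW WT.
apply: le_trans; rewrite [X in _ <= X]big_mkcond [X in X <= _]big_mkcond /=.
apply: ler_sum => r _; case: ifP => [/eqP e|_]; last by case: ifP.
by rewrite inE /psi' homB // e divff ?hom_neq0 // expr1n eqxx.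
Qed.

Local Notation toC x := ((x)%:C)%C.

Lemma real_fin (K : realType) (S : K[i]) (x : K) : 0 < x ->
  toC (8 * x) <= 2 - 2 * `|S| ^+ 2 -> `|S| <= toC (1 - x).
Proof.
move=> x0.
have [k ek] : exists k, `|S| = toC k by apply/complex_realP; exact: normr_real.
have k0 : 0 <= k by rewrite -ler0c -ek.
have -> : 2 - 2 * `|S| ^+ 2 = toC (2 - 2 * k ^+ 2).
  by rewrite ek rmorphB rmorphM rmorphXn /= !rmorph_nat.
by rewrite ek !lecR => h; nra.
Qed.

Lemma coord_bound (K : realType) (R : finComNzRingType) (eps : K) (mu : R -> K)
  (psi : R -> K[i]) :
  0 < eps -> is_distr mu -> balanced eps mu -> phom setT psi -> (exists r, psi r != 1) ->
  `|\sum_r toC (mu r) * psi r| <= toC (1 - eps / (#|R|%:R ^+ 2)).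
Proof.
move=> eps0 [mu0 mu1] hbal hpsi ex.
pose a r := toC (mu r).
have a0 : forall r, 0 <= a r by move=> r; rewrite ler0c.
have aR : forall r, (a r)^* = a r by move=> r; apply/CrealP; exact: ger0_real.
have a1 : \sum_r a r = 1 by rewrite /a -rmorph_sum mu1.
have hz : forall r, `|psi r| = 1 by move=> r; exact: hom_norm.
have zz : forall r, psi r * (psi r)^* = 1 by move=> r; exact: norm1_conj.
pose S := \sum_r a r * psi r.
pose P r s := psi r * (psi s)^*.
have eT : `|S| ^+ 2 = \sum_r \sum_s a r * a s * P r s.
  rewrite normCK rmorph_sum /S mulr_suml; apply: eq_bigr => r _.
  rewrite mulr_sumr; apply: eq_bigr => s _; rewrite rmorphM /= aR /P.
  by rewrite mulrACA.
have eT' : `|S| ^+ 2 = \sum_r \sum_s a r * a s * P s r.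
  rewrite eT exchange_big /=; apply: eq_bigr => r _; apply: eq_bigr => s _.
  by rewrite [a s * _]mulrC.
have e2 : \sum_r \sum_s a r * a s = 1.
  under eq_bigr do rewrite -mulr_sumr a1 mulr1.
  exact: a1.
have dexp : forall r s, a r * a s * `|psi r - psi s| ^+ 2
    = 2 * (a r * a s) - a r * a s * P r s - a r * a s * P s r.
  move=> r s; rewrite normCK rmorphB /= /P.
  have -> : (psi r - psi s) * ((psi r)^* - (psi s)^*) =
      psi r * (psi r)^* + psi s * (psi s)^* - psi r * (psi s)^* - psi s * (psi r)^*.
    by ring.
  rewrite !zz; ring.
have Id : 2 - 2 * `|S| ^+ 2 = \sum_r \sum_s a r * a s * `|psi r - psi s| ^+ 2.
  under eq_bigr do under eq_bigr do rewrite dexp.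
  under eq_bigr do rewrite !sumrB -mulr_sumr.
  rewrite !sumrB -mulr_sumr e2 -eT -eT'; ring.
have lb : forall r s, 8 / (#|R|%:R ^+ 2) * (a r * a s * (psi s != psi r)%:R)
    <= a r * a s * `|psi r - psi s| ^+ 2.
  move=> r s; have [e|ne] := eqVneq (psi s) (psi r).
    by rewrite /= mulr0 mulr0 mulr_ge0 ?exprn_ge0 ?mulr_ge0.
  rewrite /= mulr1.
  pose zt := psi (s - r).
  have ezt : psi r - psi s = psi r * (1 - zt).
    by rewrite /zt homB // mulrBr mulr1 mulrC divfK ?hom_neq0.
  have zt1 : zt != 1.
    by rewrite /zt homB // -subr_eq0 -(divff (hom_neq0 r hpsi)) -mulrBl mulf_eq0
      invr_eq0 (negbTE (hom_neq0 r hpsi)) orbF subr_eq0.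
  have zb := zeta_bound (cardN_gt0 R) (hom_root hpsi (s - r)) zt1.
  rewrite ezt normrM hz mul1r mulrC ler_wpM2l ?mulr_ge0 //.
  by rewrite ler_pdivrMr ?exprn_gt0 ?ltr0n ?cardN_gt0 // mulrC.
have lb2 : toC (8 * (eps / (#|R|%:R ^+ 2))) <= 2 - 2 * `|S| ^+ 2.
  rewrite Id.
  apply: (@le_trans _ _ (\sum_r \sum_s 8 / (#|R|%:R ^+ 2) * (a r * a s * (psi s != psi r)%:R)));
    last by apply: ler_sum => r _; apply: ler_sum => s _; exact: lb.
  under eq_bigr do rewrite -mulr_sumr.
  rewrite -mulr_sumr.
  have -> : toC (8 * (eps / (#|R|%:R ^+ 2))) = 8 / (#|R|%:R ^+ 2) * toC eps.
    by rewrite rmorphM fmorph_div rmorphXn !rmorph_nat mulrCA mulrC.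
  rewrite ler_wpM2l ?mulr_ge0 ?invr_ge0 ?exprn_ge0 //.
  have inner : forall r, \sum_s a r * a s * (psi s != psi r)%:R
      = a r * (1 - \sum_(s | psi s == psi r) a s).
    move=> r.
    have -> : 1 - \sum_(s | psi s == psi r) a s = \sum_(s | psi s != psi r) a s.
      by rewrite -a1 (bigID (fun s => psi s == psi r)) /= addrC addrK.
    rewrite mulr_sumr [RHS]big_mkcond; apply: eq_bigr => s _ /=.
    by case: (psi s != psi r); rewrite ?mulr1 ?mulr0.
  under eq_bigr do rewrite inner.
  rewrite -[toC eps]mul1r -a1 mulr_suml; apply: ler_sum => r _.
  rewrite ler_wpM2l //.
  have cb := coset_bound mu0 hbal hpsi ex r.
  rewrite /a -rmorph_sum mu1 -rmorph_sum -rmorphB lecR; lra.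
by rewrite real_fin // divr_gt0 // exprn_gt0 // ltr0n cardN_gt0.
Qed.


Section Main.
Variables (K : realType) (R : finComNzRingType) (N : finLmodType R) (n : nat).
Variable (F : {linear 'rV[R]_n -> N}).
Variable (mu : 'I_n -> R -> K).
Local Notation C := (K[i]).

Lemma ev_hom (f : Ch C N) : f \in chars C N -> phom setT (ev f).
Proof. by rewrite inE => /ischarP. Qed.

Lemma ev_sum (f : Ch C N) I (r : seq I) (P : pred I) (g : I -> N) :
  phom setT (ev f) -> ev f (\sum_(i <- r | P i) g i) = \prod_(i <- r | P i) ev f (g i).
Proof. by move=> hf; apply: (big_morph (ev f) (homD hf) (proj1 hf)). Qed.

Definition psi (f : Ch C N) (i : 'I_n) (r : R) := ev f (F (r *: 'e_i)).

Lemma psi_hom f i : phom setT (ev f) -> phom setT (psi f i).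
Proof.
move=> hf; split; first by rewrite /psi scale0r raddf0 (proj1 hf).
by move=> a b _ _; rewrite /psi scalerDl raddfD homD.
Qed.

Lemma evF_decomp f x : phom setT (ev f) -> ev f (F x) = \prod_i psi f i (x ord0 i).
Proof. by move=> hf; rewrite {1}(row_sum_delta x) raddf_sum ev_sum. Qed.

Definition E (f : Ch C N) :=
  \sum_(x : 'rV[R]_n) ev f (F x) * \prod_i toC (mu i (x ord0 i)).

Lemma E_prod f : phom setT (ev f) ->
  E f = \prod_i \sum_r toC (mu i r) * psi f i r.
Proof.
move=> hf; rewrite bigA_distr_bigA /E.
pose h := fun phi : {ffun 'I_n -> R} => \row_i phi i.
have hb : bijective h.
  exists (fun x : 'rV[R]_n => [ffun i => x ord0 i]).
    by move=> phi; apply/ffunP => i; rewrite ffunE mxE.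
  by move=> x; apply/rowP => i; rewrite mxE ffunE.
rewrite (reindex h) /=; last exact: onW_bij.
apply: eq_bigr => phi _; rewrite evF_decomp // -big_split /=.
by apply: eq_bigr => i _; rewrite /h !mxE mulrC.
Qed.

Lemma E_triv f : phom setT (ev f) -> (forall x, ev f x = 1) ->
  (forall i, \sum_r mu i r = 1) -> E f = 1.
Proof.
move=> hf e1 hmu1; rewrite E_prod // big1 // => i _.
under eq_bigr do rewrite /psi e1 mulr1.
by rewrite -rmorph_sum hmu1.
Qed.

Lemma E_bound f (delta eps : K) : 0 < eps ->
  (forall i, is_distr (mu i)) -> (forall i, balanced eps (mu i)) ->
  is_code F (delta * n%:R) ->
  phom setT (ev f) -> (exists y, ev f y != 1) ->
  `|E f| <= toC (expR (- (eps * delta * n%:R / (#|R|%:R ^+ 2)))).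
Proof.
move=> eps0 hmu hbal hF hf [y hy].
pose sig := [set i | [exists r, psi f i r != 1]].
have hsig : delta * n%:R <= #|sig|%:R.
  rewrite leNgt; apply/negP => hlt.
  have [x [x0 Fx]] := hF sig hlt y.
  move: hy; rewrite -Fx evF_decomp // big1 ?eqxx // => i _.
  case: (boolP (i \in sig)) => hi.
    by rewrite x0 // /psi scale0r raddf0 (proj1 hf).
  by move: hi; rewrite inE => /existsPn /(_ (x ord0 i)); rewrite negbK => /eqP.
pose x := eps / (#|R|%:R ^+ 2).
have x0 : 0 < x by rewrite divr_gt0 // exprn_gt0 // ltr0n cardN_gt0.
rewrite E_prod // normr_prod.
apply: (@le_trans _ _ (\prod_i (if i \in sig then toC (expR (- x)) else 1))).
  apply: ler_prod => i _; rewrite normr_ge0 /=; case: ifP => [hi|hi].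
    have ex : exists r, psi f i r != 1 by move: hi; rewrite inE => /existsP.
    apply: le_trans (coord_bound eps0 (hmu i) (hbal i) (psi_hom i hf) ex) _.
    by rewrite lecR; have := expR_ge1Dx (- x); rewrite addrC.
  have e1 : forall r, psi f i r = 1.
    by move=> r; move: hi; rewrite inE => /negbT/existsPn/(_ r); rewrite negbK => /eqP.
  under eq_bigr do rewrite e1 mulr1.
  by rewrite -rmorph_sum (proj2 (hmu i)) normr1.
rewrite -big_mkcond prodr_const -rmorphXn lecR -expRM_natr ler_expR.
have -> : eps * delta * n%:R / (#|R|%:R ^+ 2) = x * (delta * n%:R) by rewrite /x; ring.
nra.
Qed.
End Main.


Lemma toC_norm (K : realType) (y : K) : `|toC y| = toC `|y|.
Proof.
case: (lerP 0 y) => h.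
  by rewrite !ger0_norm ?ler0c.
by rewrite !ltr0_norm ?ltcR // rmorphN.
Qed.

Theorem lemma2p4
  (T : countIdomainType)
  (hT : dedekind_domain T)
  (hfin : forall J : T -> Prop, is_ideal J -> (exists x, J x /\ x != 0) ->
            finite_quotient J)
  (a : T) (ha0 : a != 0) (hau : a \isn't a GRing.unit)
  (R : finComNzRingType) (phi : {rmorphism T -> R})
  (phi_surj : forall r : R, exists t, phi t = r)
  (phi_ker : forall t, phi t = 0 <-> exists u, t = a * u)
  (N : finLmodType R)
  (K : realType) (delta eps : K) (hdelta : 0 < delta) (heps : 0 < eps)
  (n : nat) (hn : (0 < n)%N)
  (mu : 'I_n -> R -> K)
  (hmu : forall i, is_distr (mu i))
  (hbal : forall i, balanced eps (mu i))
  (F : {linear 'rV[R]_n -> N})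
  (hF : is_code F (delta * n%:R))
  (A : N) :
  `| prob_code F mu A - (#|N|%:R)^-1 |
    <= expR (- (eps * delta * n%:R / (#|R|%:R ^+ 2))).
Proof.
pose B := expR (- (eps * delta * n%:R / (#|R|%:R ^+ 2))).
have [f1 [f1C e1]] := one_char K[i] N.
have hmu1 : forall i, \sum_r mu i r = 1 := fun i => proj2 (hmu i).
have key : toC (prob_code F mu A) =
    (#|N|%:R)^-1 * \sum_(f in chars K[i] N) ev f (- A) * E F mu f.
  rewrite /prob_code rmorph_sum big_mkcond /=.
  transitivity (\sum_(x : 'rV[R]_n) (F x - A == 0)%:R * \prod_i toC (mu i (x ord0 i))).
    apply: eq_bigr => x _; rewrite subr_eq0 rmorph_prod.
    by case: eqP; rewrite ?mul1r ?mul0r.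
  have -> : \sum_(x : 'rV[R]_n) (F x - A == 0)%:R * \prod_i toC (mu i (x ord0 i)) =
     \sum_(x : 'rV[R]_n) (#|N|%:R)^-1 * \sum_(f in chars K[i] N)
        ev f (F x - A) * \prod_i toC (mu i (x ord0 i)).
    by apply: eq_bigr => x _; rewrite (indicator K[i] (F x - A)) -mulrA mulr_suml.
  rewrite -mulr_sumr exchange_big /=; congr (_ * _).
  apply: eq_bigr => f hf; rewrite /E mulr_sumr; apply: eq_bigr => x _.
  rewrite homD; last exact: ev_hom.
  by rewrite [RHS]mulrA [ev f (- A) * _]mulrC.
have spl : \sum_(f in chars K[i] N) ev f (- A) * E F mu f =
    1 + \sum_(f in chars K[i] N | f != f1) ev f (- A) * E F mu f.
  by rewrite (bigD1 f1) //= e1 mul1r (E_triv F (ev_hom f1C) e1 hmu1).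
have NC : ((#|N|%:R : K[i]) != 0) by rewrite pnatr_eq0 -lt0n cardN_gt0.
have key2 : toC (prob_code F mu A - (#|N|%:R)^-1) =
    (#|N|%:R)^-1 * \sum_(f in chars K[i] N | f != f1) ev f (- A) * E F mu f.
  by rewrite rmorphB /= key spl fmorphV /= rmorph_nat mulrDr mulr1 addrAC subrr add0r.
rewrite -lecR -toC_norm key2 normrM.
apply: (@le_trans _ _ ((#|N|%:R)^-1 * \sum_(f in chars K[i] N) toC B)).
  rewrite ger0_norm ?invr_ge0 ?ler0n // ler_wpM2l ?invr_ge0 ?ler0n //.
  apply: le_trans (ler_norm_sum _ _ _) _.
  rewrite [X in _ <= X](bigD1 f1) //= -[X in X <= _]add0r lerD //.
    by rewrite ler0c expR_ge0.
  apply: ler_sum => f /andP[fC ff1].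
  rewrite normrM (hom_norm (- A) (ev_hom fC)) mul1r.
  apply: E_bound => //; first exact: ev_hom.
  case/boolP: [exists y, ev f y != 1] => [/existsP//|/existsPn hall].
  by case/eqP: ff1; apply: ev_inj => y; rewrite e1; have := hall y; rewrite negbK => /eqP.
by rewrite sumr_const chars_card -[toC B *+ _]mulr_natr mulrCA mulVf // mulr1.
Qed.
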